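(* Over undirected graphs, $\varphi_{\mathit{GadLin}}(x)$ is expressible by an ACR-GNN.
   Context: Undirected graphs are directed graphs $G=(V,E,\lambda)$ (finite $V$, loop-free $E$, $\lambda:V\to\{0,1\}^d$) with symmetric edge relation; $\{v,w\}$ denotes the pair of edges $(v,w),(w,v)$, and $N_G(v)$ is the neighbourhood of $v$. An ACR-GNN layer for undirected graphs is a triple $(\mathsf{agg},\mathsf{comb},\mathsf{read})$ where $\mathsf{agg}$ and $\mathsf{read}$ map multisets of vectors to vectors; it maps $\lambda$ to $\lambda'(v)=\mathsf{comb}\big(\lambda(v), \mathsf{agg}(\{\!\{\lambda(w)\}\!\}_{w\in N_G(v)}), \mathsf{read}(\{\!\{\lambda(w)\}\!\}_{w\in V})\big)$, where $\{\!\{\cdot\}\!\}$ denotes a multiset. An ACR-GNN classifier is a fixed number of layers followed by a classification function to truth values. The gadgetisation $\mathsf{gad}(G)$ of a directed graph $G=(V,E,\lambda)$ is the undirected graph of dimension 3 such that for each edge $(u,w)\in E$ it has nodes $v^1_u, v^2_{(u,w)}, v^3_{(u,w)}, v^1_w$, edges $\{v^1_u,v^2_{(u,w)}\}$, $\{v^2_{(u,w)},v^3_{(u,w)}\}$, $\{v^3_{(u,w)},v^1_w\}$, and labels $(1,0,0)$ for $v^1_u,v^1_w$, $(0,1,0)$ for $v^2_{(u,w)}$, $(0,0,1)$ for $v^3_{(u,w)}$. $\varphi_{\mathit{GadLin}}(x)$ is the node classifier accepting a node of a graph $G$ iff $G$ is isomorphic to $\mathsf{gad}(G')$ for some strict linear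 order $G'$. *)

(* Defs.v *)
From HB Require Import structures.
From mathcomp Require Import all_boot all_order all_algebra.
From Stdlib Require Import Rdefinitions.
From mathcomp Require Import Rstruct.
Set Implicit Arguments. Unset Strict Implicit. Unset Printing Implicit Defensive.

Record graph (d : nat) := Graph {
  vert : finType;
  edge : rel vert;
  lab  : vert -> d.-tuple bool }.

Definition loop_free d (G : graph d) : Prop := irreflexive (@edge d G).

Definition undirected d (G : graph d) : Prop :=
  irreflexive (@edge d G) /\ symmetric (@edge d G).

Definition strict_linear_order d (G : graph d) : Prop :=
  [/\ irreflexive (@edge d G),
      transitive (@edge d G) &
      forall u w : vert G, u != w -> edge u w || edge w u].

Definition isomorphic d (G H : graph d) : Prop :=
  exists f : vert G -> vert H,
    [/\ bijective f,
        forall u v, edge (f u) (f v) = edge u v &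
        forall u, lab (f u) = lab u].

(* raw nodes: inl u = v^1_u ; inr (inl e) = v^2_e ; inr (inr e) = v^3_e *)
Definition gad_raw (T : finType) : finType := (T + ((T * T) + (T * T)))%type.

Definition gad_valid (T : finType) (E : rel T) (x : gad_raw T) : bool :=
  match x with
  | inl u => [exists w, E u w || E w u]
  | inr (inl e) => E e.1 e.2
  | inr (inr e) => E e.1 e.2
  end.

Definition gad_adj_raw (T : finType) (x y : gad_raw T) : bool :=
  match x, y with
  | inl u, inr (inl e) => e.1 == u          (* {v^1_u, v^2_(u,w)} *)
  | inr (inl e), inl u => e.1 == u
  | inr (inl e), inr (inr e') => e == e'    (* {v^2_e, v^3_e} *)
  | inr (inr e'), inr (inl e) => e == e'
  | inr (inr e), inl w => e.2 == w          (* {v^3_(u,w), v^1_w} *)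
  | inl w, inr (inr e) => e.2 == w
  | _, _ => false
  end.

Definition gad_lab_raw (T : finType) (x : gad_raw T) : 3.-tuple bool :=
  match x with
  | inl _ => [tuple true; false; false]
  | inr (inl _) => [tuple false; true; false]
  | inr (inr _) => [tuple false; false; true]
  end.

Definition gad_vert d (G : graph d) : finType :=
  {x : gad_raw (vert G) | gad_valid (@edge d G) x}.

Definition gad d (G : graph d) : graph 3 :=
  @Graph 3 (gad_vert G)
    (fun x y => gad_adj_raw (val x) (val y))
    (fun x => gad_lab_raw (val x)).

Definition vec (n : nat) := 'rV[R]_n.

(* multisets over an eqType, represented by their multiplicity function *)
Definition mset (T : eqType) := T -> nat.

Definition msetof (V : finType) (T : eqType) (A : {pred V}) (f : V -> T) : mset T :=
  fun x => #|[pred w in A | f w == x]|.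

Record acr_layer (n m : nat) := ACRLayer {
  agg_dim : nat;
  read_dim : nat;
  agg  : mset (vec n) -> vec agg_dim;
  read : mset (vec n) -> vec read_dim;
  comb : vec n -> vec agg_dim -> vec read_dim -> vec m }.

Definition apply_layer n m (L : acr_layer n m) d (G : graph d)
    (lam : vert G -> vec n) : vert G -> vec m :=
  fun v => @comb n m L (lam v)
                  (@agg n m L (msetof [pred w | @edge d G v w] lam))
                  (@read n m L (msetof [pred w : vert G | true] lam)).

Inductive acr_gnn : nat -> nat -> Type :=
  | gnn_nil : forall n, acr_gnn n n
  | gnn_cons : forall n m k, acr_layer n m -> acr_gnn m k -> acr_gnn n k.

Fixpoint run_gnn n k (N : acr_gnn n k) d (G : graph d) {struct N}
  : (vert G -> vec n) -> vert G -> vec k :=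
  match N in acr_gnn n k return (vert G -> vec n) -> vert G -> vec k with
  | gnn_nil _ => fun lam => lam
  | gnn_cons _ _ _ L N' => fun lam => run_gnn N' (apply_layer L lam)
  end.

Record acr_classifier (d : nat) := ACRClassifier {
  out_dim : nat;
  net : acr_gnn d out_dim;
  cls : vec out_dim -> bool }.

Local Open Scope ring_scope.
Definition init_feat d (G : graph d) (v : vert G) : vec d :=
  \row_(i < d) (if tnth (lab v) i then 1 else 0).

Definition accepts d (C : acr_classifier d) (G : graph d) (v : vert G) : bool :=
  @cls d C (run_gnn (@net d C) (@init_feat d G) v).

Definition phi_GadLin (G : graph 3) (x : vert G) : Prop :=
  exists (d' : nat) (G' : graph d'), strict_linear_order G' /\ isomorphic G (gad G').

(* Main.v *)
Require Import Defs.
From HB Require Import structures.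
From mathcomp Require Import all_boot all_order all_algebra.
From Stdlib Require Import Rdefinitions ClassicalEpsilon FunctionalExtensionality.
From mathcomp Require Import Rstruct.
Set Implicit Arguments. Unset Strict Implicit. Unset Printing Implicit Defensive.
Import Order.TTheory GRing.Theory Num.Theory.

Section RS.
Local Open Scope ring_scope.
Definition q4 := (nat * nat * nat * nat)%type.
Definition enc (q : q4) : vec 4 :=
  \row_(i < 4) ((nth 0%N [:: q.1.1.1; q.1.1.2; q.1.2; q.2] i)%:R).
Definition dec (x : vec 4) : q4 :=
  (Num.trunc (x ord0 (inord 0)), Num.trunc (x ord0 (inord 1)),
   Num.trunc (x ord0 (inord 2)), Num.trunc (x ord0 (inord 3))).
Arguments dec : simpl never.
Arguments enc : simpl never.
Lemma encK : cancel enc dec.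
Proof. by case=> [[[a b] c] d]; rewrite /dec /enc !mxE !inordK //= !natrK. Qed.
Lemma enc_inj : injective enc. Proof. exact: can_inj encK. Qed.

End RS.
Definition bP (P : Prop) : bool := if excluded_middle_informative P then true else false.
Lemma bPE P : bP P <-> P.
Proof. by rewrite /bP; case: excluded_middle_informative. Qed.
Lemma bP_ext P Q : (P <-> Q) -> bP P = bP Q.
Proof.
move=> h; rewrite /bP; case: excluded_middle_informative => a; case: excluded_middle_informative => b //; exfalso; tauto.
Qed.

Section RS2.
Local Open Scope ring_scope.
Definition rowb (t : 3.-tuple bool) : vec 3 := \row_(i < 3) (if tnth t i then 1 else 0)%R.
Definition t1 : 3.-tuple bool := [tuple true; false; false].
Definition t2 : 3.-tuple bool := [tuple false; true; false].
Definition t3 : 3.-tuple bool := [tuple false; false; true].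
End RS2.
Definition tau0 (x : vec 3) : nat :=
  if x == rowb t1 then 1 else if x == rowb t2 then 2 else if x == rowb t3 then 3 else 0.
Definition eps (P : nat -> Prop) : nat := epsilon (inhabits 0%N) P.
Lemma epsP (P : nat -> Prop) : (exists n, P n) -> P (eps P).
Proof. exact: epsilon_spec. Qed.

Definition okb (q : q4) : bool := let '(t,c1,c2,c3) := q in
 [|| [&& t == 1, c1 == 0 & 0 < c2 + c3], [&& t == 2, c1 == 1, c2 == 0 & c3 == 1]
   | [&& t == 3, c1 == 1, c2 == 1 & c3 == 0]].

Definition L1 : acr_layer 3 4 := @ACRLayer 3 4 4 0
  (fun M => enc (0, M (rowb t1), M (rowb t2), M (rowb t3)))
  (fun _ => const_mx 0%R)
  (fun x a _ => let q := dec a in enc (tau0 x, q.1.1.2, q.1.2, q.2)).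
Definition comb2 (q : q4) (S : nat) : q4 := let '(t,c1,c2,c3) := q in
  if okb q then (if t == 1 then (1,c2,0,0) else (t,S,0,0)) else (0,0,0,0).
Definition L2 : acr_layer 4 4 := @ACRLayer 4 4 4 0
  (fun M => enc (eps (fun i => exists a b, 0 < M (enc (1,a,i,b))), 0,0,0))
  (fun _ => const_mx 0%R)
  (fun x a _ => enc (comb2 (dec x) (dec a).1.1.1)).
Definition comb3 (q : q4) (S : nat) : q4 := let '(t,p,_,_) := q in
  if t == 2 then (2,p,S,0) else if t == 3 then (3,0,0,0) else (t,p,0,0).
Definition L3 : acr_layer 4 4 := @ACRLayer 4 4 4 0
  (fun M => enc (eps (fun j => 0 < M (enc (3,j,0,0))), 0,0,0))
  (fun _ => const_mx 0%R)
  (fun x a _ => enc (comb3 (dec x) (dec a).1.1.1)).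
Definition Cond (M : mset (vec 4)) : Prop :=
  M (enc (0,0,0,0)) = 0 /\ (forall i, M (enc (1,i,0,0)) <= 1) /\
  forall i j, M (enc (2,i,j,0)) =
    (if [&& j < i, 0 < M (enc (1,i,0,0)) & 0 < M (enc (1,j,0,0))] then 1 else 0).
Definition L4 : acr_layer 4 4 := @ACRLayer 4 4 0 4
  (fun _ => const_mx 0%R) (fun M => enc (nat_of_bool (bP (Cond M)), 0,0,0)) (fun _ _ r => r).
Definition theC : acr_classifier 3 := @ACRClassifier 3 4
  (gnn_cons L1 (gnn_cons L2 (gnn_cons L3 (gnn_cons L4 (gnn_nil 4)))))
  (fun f => (dec f).1.1.1 == 1).

Section G.
Variable G : graph 3.
Definition nb (v : vert G) : {pred vert G} := [pred w | edge v w].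
Definition tau (v : vert G) := tau0 (init_feat v).
Definition cnt (t : 3.-tuple bool) (v : vert G) := msetof (nb v) (@init_feat 3 G) (rowb t).
Definition F1 v : q4 := (tau v, cnt t1 v, cnt t2 v, cnt t3 v).
Definition S1 v := eps (fun i => exists a b, 0 < msetof (nb v) (fun w => enc (F1 w)) (enc (1,a,i,b))).
Definition F2 v := comb2 (F1 v) (S1 v).
Definition S3 v := eps (fun j => 0 < msetof (nb v) (fun w => enc (F2 w)) (enc (3,j,0,0))).
Definition F3 v := comb3 (F2 v) (S3 v).
Definition cF q := #|[pred v | F3 v == q]|.
Definition Good := cF (0,0,0,0) = 0 /\ (forall i, cF (1,i,0,0) <= 1) /\
  forall i j, cF (2,i,j,0) = if [&& j < i, 0 < cF (1,i,0,0) & 0 < cF (1,j,0,0)] then 1 else 0.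

Lemma mset_enc (A : {pred vert G}) (F : vert G -> q4) q :
  msetof A (fun w => enc (F w)) (enc q) = #|[pred w in A | F w == q]|.
Proof. by apply: eq_card => w; rewrite !inE (inj_eq enc_inj). Qed.

Lemma cFE q : msetof [pred w : vert G | true] (fun w => enc (F3 w)) (enc q) = cF q.
Proof. by rewrite mset_enc; apply: eq_card => w; rewrite !inE. Qed.

Lemma accepts_Good (x : vert G) : accepts theC x = bP Good.
Proof.
have e1 : apply_layer L1 (@init_feat 3 G) = fun v => enc (F1 v).
  by apply: functional_extensionality => v; rewrite /apply_layer /L1; cbn [comb agg read]; rewrite encK.
have e2 : apply_layer L2 (fun v => enc (F1 v)) = fun v => enc (F2 v).
  by apply: functional_extensionality => v; rewrite /apply_layer /L2; cbn [comb agg read]; rewrite !encK.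
have e3 : apply_layer L3 (fun v => enc (F2 v)) = fun v => enc (F3 v).
  by apply: functional_extensionality => v; rewrite /apply_layer /L3; cbn [comb agg read]; rewrite !encK.
rewrite /accepts /= e1 e2 e3 {1}/enc mxE (@inordK 3 0) //= natrK.

rewrite (@bP_ext _ Good); first by case: bP.
rewrite /Cond /Good !cFE; split=> -[h0 [h1 h2]]; split=> //; split=> [i|i j]; rewrite ?cFE ?h1 ?h2 //; [move: (h1 i)|move: (h2 i j)]; by rewrite ?cFE.
Qed.
End G.
Lemma card_pre (T1 T2 : finType) (f : T1 -> T2) (P : {pred T2}) :
  bijective f -> #|[pred w | f w \in P]| = #|P|.
Proof.
move=> bf; have fi := bij_inj bf; case: bf => g fg gf.
rewrite -(card_image fi); apply: eq_card => y.
apply/imageP/idP => [[w hw ->] //|hy]; by exists (g y); rewrite ?inE gf.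
Qed.

Lemma run_iso d (G H : graph d) (f : vert G -> vert H) :
  bijective f -> (forall u v, edge (f u) (f v) = edge u v) ->
  forall n k (N : acr_gnn n k) (lG : vert G -> vec n) lH,
  (forall v, lG v = lH (f v)) -> forall v, run_gnn N lG v = run_gnn N lH (f v).
Proof.
move=> bf he n k N; elim: N => [n' lG lH h v //|n' m k' L N IH lG lH h v] /=.
apply: IH => w; rewrite /apply_layer h; congr comb.
  congr agg; apply: functional_extensionality => y; rewrite /msetof.
  rewrite -(card_pre _ bf); apply: eq_card => z; by rewrite !inE he h.
congr read; apply: functional_extensionality => y; rewrite /msetof.
rewrite -(card_pre _ bf); apply: eq_card => z; by rewrite !inE h.
Qed.

Lemma accepts_iso (C : acr_classifier 3) (G H : graph 3) (f : vert G -> vert H) :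
  bijective f -> (forall u v, edge (f u) (f v) = edge u v) ->
  (forall u, lab (f u) = lab u) -> forall x, accepts C x = accepts C (f x).
Proof.
move=> bf he hl x; rewrite /accepts (@run_iso _ _ _ _ bf he _ _ _ _ (@init_feat 3 H)) // => v.
by rewrite /init_feat hl.
Qed.

Section RS3.
Local Open Scope ring_scope.
Lemma rowb_neq (t t' : 3.-tuple bool) (i : 'I_3) : tnth t i -> ~~ tnth t' i -> rowb t != rowb t'.
Proof.
move=> h h'; apply/eqP => /matrixP /(_ ord0 i); rewrite !mxE h (negbTE h') => /eqP.
by rewrite oner_eq0.
Qed.
Lemma rowb_inj : injective rowb.
Proof.
move=> t t' /matrixP h; apply: eq_from_tnth => i; move: (h ord0 i); rewrite !mxE.
by case: (tnth t i); case: (tnth t' i) => // /eqP; rewrite ?oner_eq0 // eq_sym oner_eq0.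
Qed.
End RS3.

Lemma r12 : rowb t1 != rowb t2. Proof. exact: (@rowb_neq _ _ ord0). Qed.
Lemma r13 : rowb t1 != rowb t3. Proof. exact: (@rowb_neq _ _ ord0). Qed.
Lemma r23 : rowb t2 != rowb t3. Proof. exact: (@rowb_neq _ _ (@Ordinal 3 1 isT)). Qed.

Lemma tau0_1 x : (tau0 x == 1) = (x == rowb t1).
Proof. by rewrite /tau0; case: (x == rowb t1) => //; case: (x == rowb t2) => //; case: (x == rowb t3). Qed.
Lemma tau0_2 x : (tau0 x == 2) = (x == rowb t2).
Proof.
rewrite /tau0; case: (@eqP _ x (rowb t1)) => [->|_]; first by rewrite eq_sym (negbTE r12).
by case: (x == rowb t2) => //; case: (x == rowb t3).
Qed.
Lemma tau0_3 x : (tau0 x == 3) = (x == rowb t3).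
Proof.
rewrite /tau0; case: (@eqP _ x (rowb t1)) => [->|_]; first by rewrite eq_sym (negbTE r13).
case: (@eqP _ x (rowb t2)) => [->|_]; first by rewrite eq_sym (negbTE r23).
by case: (x == rowb t3).
Qed.
Section Spec.
Variable G : graph 3.
Hypothesis hsym : symmetric (@edge 3 G).
Hypothesis hok : forall v : vert G, okb (F1 v).

Definition nbk k (v : vert G) : {pred vert G} := [pred w | edge v w && (tau w == k)].
Lemma cnt1E v : cnt t1 v = #|nbk 1 v|.
Proof. by apply: eq_card => w; rewrite !inE /tau tau0_1. Qed.
Lemma cnt2E v : cnt t2 v = #|nbk 2 v|.
Proof. by apply: eq_card => w; rewrite !inE /tau tau0_2. Qed.
Lemma cnt3E v : cnt t3 v = #|nbk 3 v|.
Proof. by apply: eq_card => w; rewrite !inE /tau tau0_3. Qed.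

Definition pk (P : {pred vert G}) d := odflt d [pick w | w \in P].
Lemma pkP P d : #|P| = 1 -> pk P d \in P /\ forall w, w \in P -> w = pk P d.
Proof.
move=> h; case: (mem_card1 h) => x hx; rewrite /pk.
case: pickP => [y hy|h0] /=.
  have -> : y = x by move: hy; rewrite hx => /eqP.
  by rewrite hx inE; split=> // w; rewrite hx => /eqP.
by move: (h0 x); rewrite hx inE eqxx.
Qed.

Lemma okE v :
  [\/ [/\ tau v = 1, #|nbk 1 v| = 0 & 0 < #|nbk 2 v| + #|nbk 3 v|],
      [/\ tau v = 2, #|nbk 1 v| = 1, #|nbk 2 v| = 0 & #|nbk 3 v| = 1] |
      [/\ tau v = 3, #|nbk 1 v| = 1, #|nbk 2 v| = 1 & #|nbk 3 v| = 0]].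
Proof.
move: (hok v); rewrite /okb /F1 -cnt1E -cnt2E -cnt3E.
case/or3P => [/and3P[/eqP-> /eqP-> h]|/and4P[/eqP-> /eqP-> /eqP-> /eqP->]|/and4P[/eqP-> /eqP-> /eqP-> /eqP->]].
- by apply: Or31.
- by apply: Or32.
- by apply: Or33.
Qed.

Definition src v := pk (nbk 1 v) v.
Definition t3n v := pk (nbk 3 v) v.
Definition t2n v := pk (nbk 2 v) v.

Lemma uniq_spec k v : #|nbk k v| = 1 ->
  let w0 := pk (nbk k v) v in
  edge v w0 /\ tau w0 = k /\ forall w, edge v w -> tau w = k -> w = w0.
Proof.
move=> h /=; case: (pkP v h); rewrite inE => /andP[h1 /eqP h2] h3.
by split=> //; split=> // w e t; apply: h3; rewrite inE e t eqxx.
Qed.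

Lemma src_spec v : tau v != 1 ->
  edge v (src v) /\ tau (src v) = 1 /\ forall w, edge v w -> tau w = 1 -> w = src v.
Proof.
move=> h; apply: uniq_spec.
by case: (okE v) => -[t]; rewrite ?t in h.
Qed.
Lemma t3_spec v : tau v = 2 ->
  edge v (t3n v) /\ tau (t3n v) = 3 /\ forall w, edge v w -> tau w = 3 -> w = t3n v.
Proof. by move=> h; apply: uniq_spec; case: (okE v) => -[t]; rewrite ?t in h. Qed.
Lemma t2_spec v : tau v = 3 ->
  edge v (t2n v) /\ tau (t2n v) = 2 /\ forall w, edge v w -> tau w = 2 -> w = t2n v.
Proof. by move=> h; apply: uniq_spec; case: (okE v) => -[t]; rewrite ?t in h. Qed.

Lemma no_same k (v w : vert G) : tau v = k -> edge v w -> tau w = k -> False.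
Proof.
move=> tv e tw.
have : #|nbk k v| = 0.
  by case: (okE v) => -[t]; rewrite t in tv; rewrite -tv.
by move/card0_eq/(_ w); rewrite inE e tw eqxx.
Qed.

Lemma tauV (v : vert G) : tau v = 1 \/ tau v = 2 \/ tau v = 3.
Proof. by case: (okE v) => -[->]; auto. Qed.

Lemma t32 (b : vert G) : tau b = 3 -> t3n (t2n b) = b.
Proof.
move=> hb; case: (t2_spec hb) => e [ta _].
by case: (t3_spec ta) => _ [_ u]; symmetry; apply: u => //; rewrite hsym.
Qed.
Lemma t23 (a : vert G) : tau a = 2 -> t2n (t3n a) = a.
Proof.
move=> ha; case: (t3_spec ha) => e [tb _].
by case: (t2_spec tb) => _ [_ u]; symmetry; apply: u => //; rewrite hsym.
Qed.

Lemma F1E (w : vert G) : F1 w = (tau w, cnt t1 w, cnt t2 w, cnt t3 w). Proof. by []. Qed.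

Lemma S1E (v : vert G) : tau v != 1 -> S1 v = cnt t2 (src v).
Proof.
move=> h; case: (src_spec h) => e [t u].
have : exists i a b, 0 < msetof (nb v) (fun w => enc (F1 w)) (enc (1,a,i,b)).
  exists (cnt t2 (src v)), (cnt t1 (src v)), (cnt t3 (src v)).
  rewrite mset_enc; apply/card_gt0P; exists (src v); by rewrite !inE F1E t e eqxx.
case=> i hi; have := @epsP (fun i => exists a b, 0 < msetof (nb v) (fun w => enc (F1 w)) (enc (1,a,i,b))) (ex_intro _ i hi).
rewrite -/(S1 v) => -[a [b]].
rewrite mset_enc => /card_gt0P [w]; rewrite !inE F1E => /andP[ew /eqP [tw _ <- _]].
by rewrite (u w ew tw).
Qed.

Lemma F2E (v : vert G) : F2 v = if tau v == 1 then (1, cnt t2 v, 0, 0) else (tau v, S1 v, 0, 0).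
Proof. by rewrite /F2 F1E /comb2 -F1E hok. Qed.

Lemma S3E (a : vert G) : tau a = 2 -> S3 a = S1 (t3n a).
Proof.
move=> h; case: (t3_spec h) => e [t u].
have : exists j, 0 < msetof (nb a) (fun w => enc (F2 w)) (enc (3,j,0,0)).
  exists (S1 (t3n a)); rewrite mset_enc; apply/card_gt0P; exists (t3n a).
  by rewrite !inE F2E t e eqxx.
case=> j hj; have := @epsP (fun j => 0 < msetof (nb a) (fun w => enc (F2 w)) (enc (3,j,0,0))) (ex_intro _ j hj).
rewrite -/(S3 a).
rewrite mset_enc => /card_gt0P [w]; rewrite !inE F2E => /andP[ew].
case: ifP => [_ //|_ /eqP [tw <-]].
by rewrite (u w ew tw).
Qed.

Lemma F3E (v : vert G) : F3 v = if tau v == 1 then (1, cnt t2 v, 0, 0)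
  else if tau v == 2 then (2, cnt t2 (src v), cnt t2 (src (t3n v)), 0) else (3,0,0,0).
Proof.
rewrite /F3 F2E; case: (tauV v) => [tv|[tv|tv]]; rewrite tv.
- by [].
- have t3' : tau (t3n v) != 1 by rewrite (proj1 (proj2 (t3_spec tv))).
  rewrite (S3E tv) (S1E t3') S1E; last by rewrite tv.
  by [].
- by [].
Qed.
End Spec.
Lemma bij_of (T T' : finType) (f : T -> T') :
  injective f -> (forall y, exists x, f x = y) -> bijective f.
Proof.
move=> fi fs; apply: (inj_card_bij fi); rewrite -(card_codom fi).
apply: subset_leq_card; apply/subsetP => y _; case: (fs y) => x <-; exact: codom_f.
Qed.

Lemma gad_adj_sym (T : finType) (x y : gad_raw T) : gad_adj_raw x y = gad_adj_raw y x.
Proof. by case: x => [u|[e|e]]; case: y => [u'|[e'|e']] //=; rewrite eq_sym. Qed.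

Lemma Good_ok (G : graph 3) : Good G -> forall v : vert G, okb (F1 v).
Proof.
case=> h0 _ v; apply/negPn/negP => hn.
have e3 : F3 v = (0,0,0,0).
  rewrite /F3 /F2; move: hn; case: (F1 v) => [[[a b] c] d] /= /negbTE -> //.
have : 0 < cF G (0,0,0,0) by apply/card_gt0P; exists v; rewrite inE e3.
by rewrite h0.
Qed.

Section Back.
Variable G : graph 3.
Hypothesis hsym : symmetric (@edge 3 G).
Hypothesis hG : Good G.
Let hok := Good_ok hG.
Definition s (v : vert G) := cnt t2 v.
Definition tgt (v : vert G) := src (t3n v).

Lemma F3_1 (v : vert G) : tau v = 1 -> F3 v = (1, s v, 0, 0).
Proof. by move=> h; rewrite (F3E hok) h. Qed.
Lemma F3_2 (v : vert G) : tau v = 2 -> F3 v = (2, s (src v), s (tgt v), 0).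
Proof. by move=> h; rewrite (F3E hok) h. Qed.
Lemma F3_3 (v : vert G) : tau v = 3 -> F3 v = (3, 0, 0, 0).
Proof. by move=> h; rewrite (F3E hok) h. Qed.

Lemma src1 (v : vert G) : tau v != 1 -> tau (src v) = 1.
Proof. by move=> h; case: (src_spec hok h) => _ []. Qed.
Lemma tgt1 (v : vert G) : tau v = 2 -> tau (tgt v) = 1.
Proof. by move=> h; apply: src1; rewrite (proj1 (proj2 (t3_spec hok h))). Qed.

Lemma Sc (u w : vert G) : tau u = 1 -> tau w = 1 -> s u = s w -> u = w.
Proof.
move=> tu tw e; case: hG => _ [h1 _]; move/card_le1_eqP: (h1 (s u)).
by apply; rewrite inE F3_1 // ?e.
Qed.

Lemma Pr (a : vert G) : tau a = 2 -> s (tgt a) < s (src a).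
Proof.
move=> ta; case: hG => _ [_ h2].
have : 0 < cF G (2, s (src a), s (tgt a), 0).
  by apply/card_gt0P; exists a; rewrite inE F3_2.
by rewrite h2; case: (s (tgt a) < s (src a)).
Qed.

Lemma Inj (a a' : vert G) : tau a = 2 -> tau a' = 2 -> src a = src a' -> tgt a = tgt a' -> a = a'.
Proof.
move=> ta ta' e1 e2; case: hG => _ [_ h2].
have : cF G (2, s (src a), s (tgt a), 0) <= 1 by rewrite h2; case: ifP.
move/card_le1_eqP; by apply; rewrite inE F3_2 // ?e1 ?e2.
Qed.

Lemma Sur (u w : vert G) : tau u = 1 -> tau w = 1 -> s w < s u ->
  exists a, [/\ tau a = 2, src a = u & tgt a = w].
Proof.
move=> tu tw lt; case: hG => _ [_ h2]; move: (h2 (s u) (s w)).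
have -> : 0 < cF G (1, s u, 0, 0) by apply/card_gt0P; exists u; rewrite inE F3_1.
have -> : 0 < cF G (1, s w, 0, 0) by apply/card_gt0P; exists w; rewrite inE F3_1.
rewrite lt /= => h; have : 0 < cF G (2, s u, s w, 0) by rewrite h.
move=> /card_gt0P [a]; rewrite inE => /eqP ha.
have ta : tau a = 2.
  case: (tauV hok a) => [t|[t|t]] //.
    by rewrite F3_1 in ha.
  by rewrite F3_3 in ha.
move: ha; rewrite F3_2 // => -[e1 e2].
exists a; split=> //; apply: Sc => //; by [apply: src1; rewrite ta | apply: tgt1].
Qed.

Lemma edge_src (a w : vert G) : tau a != 1 -> tau w = 1 -> edge a w = (w == src a).
Proof.
move=> ta tw; case: (src_spec hok ta) => e [_ u].
by apply/idP/eqP => [h|->] //; apply: u.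
Qed.
Lemma edge_t3 (a w : vert G) : tau a = 2 -> tau w = 3 -> edge a w = (w == t3n a).
Proof.
move=> ta tw; case: (t3_spec hok ta) => e [_ u].
by apply/idP/eqP => [h|->] //; apply: u.
Qed.
Lemma edge_t2 (a w : vert G) : tau a = 3 -> tau w = 2 -> edge a w = (w == t2n a).
Proof.
move=> ta tw; case: (t2_spec hok ta) => e [_ u].
by apply/idP/eqP => [h|->] //; apply: u.
Qed.

Definition T1 : finType := {v : vert G | tau v == 1}.
Definition G' : graph 0 := @Graph 0 T1 (fun u w => s (val w) < s (val u)) (fun _ => [tuple]).

Lemma G'slo : strict_linear_order G'.
Proof.
split.
- by move=> u /=; rewrite ltnn.
- by move=> y x z /= h1 h2; exact: ltn_trans h2 h1.
- move=> u w neq /=; rewrite -neq_ltn; apply/eqP => e; move/eqP: neq; apply.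
  by apply: val_inj; apply: Sc => //; [exact/eqP/(svalP u)|exact/eqP/(svalP w)].
Qed.

Lemma back (x : vert G) : phi_GadLin x.
Proof.
rewrite /phi_GadLin; exists 0; exists G'; split; first exact: G'slo.
have [u0 hu0] : exists u : vert G, tau u = 1.
  case: (tauV hok x) => [t|t]; first by exists x.
  by exists (src x); apply: src1; case: t => ->.
pose U0 : T1 := exist _ u0 (introT eqP hu0).
pose toT1 (v : vert G) : T1 := insubd U0 v.
have toT1K : forall v : vert G, tau v = 1 -> val (toT1 v) = v.
  by move=> v h; rewrite val_insubd h eqxx.
have toT1_eq : forall p q : vert G, tau p = 1 -> tau q = 1 -> (toT1 p == toT1 q) = (p == q).
  by move=> p q hp hq; rewrite -val_eqE !toT1K.
have nos : forall k (p q : vert G), tau p = k -> tau q = k -> edge p q = false.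
  move=> k p q hp hq; apply/negP => e; exact: (no_same hok hp e hq).
have t2_2 : forall b : vert G, tau b = 3 -> tau (t2n b) = 2.
  by move=> b hb; case: (t2_spec hok hb) => _ [].
have t3_3 : forall a : vert G, tau a = 2 -> tau (t3n a) = 3.
  by move=> a ha; case: (t3_spec hok ha) => _ [].
have tgt_t2 : forall b : vert G, tau b = 3 -> tgt (t2n b) = src b.
  by move=> b hb; rewrite /tgt t32.
have s1 : forall v : vert G, tau v = 2 -> tau (src v) = 1.
  by move=> v h; apply: src1; rewrite h.
have s1' : forall v : vert G, tau v = 3 -> tau (src v) = 1.
  by move=> v h; apply: src1; rewrite h.
pose fr (v : vert G) : gad_raw T1 :=
  if tau v == 1 then inl (toT1 v)
  else if tau v == 2 then inr (inl (toT1 (src v), toT1 (tgt v)))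
  else inr (inr (toT1 (src (t2n v)), toT1 (tgt (t2n v)))).
have valid : forall v : vert G, gad_valid (@edge 0 G') (fr v).
  move=> v; rewrite /fr; case: (tauV hok v) => [tv|[tv|tv]]; rewrite tv /=.
  - case: (okE hok v) => -[]; rewrite tv // => _ _.
    rewrite addn_gt0 => /orP [] /card_gt0P [w]; rewrite inE => /andP [e /eqP tw].
    + have sw : src w = v.
        by apply/esym/eqP; rewrite -edge_src ?tw // hsym.
      apply/existsP; exists (toT1 (tgt w)); apply/orP; left => /=.
      by rewrite !toT1K ?tgt1 // -sw Pr.
    + have sw : tgt (t2n w) = v.
        by rewrite tgt_t2 //; apply/esym/eqP; rewrite -edge_src ?tw // hsym.
      apply/existsP; exists (toT1 (src (t2n w))); apply/orP; right => /=.
      by rewrite !toT1K ?s1 ?t2_2 // -sw Pr ?t2_2.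
  - by rewrite !toT1K ?tgt1 ?s1 // Pr.
  - by rewrite !toT1K ?tgt1 ?s1 ?t2_2 // Pr ?t2_2.
pose y0 : vert (gad G') := exist _ (fr x) (valid x).
pose f (v : vert G) : vert (gad G') := insubd y0 (fr v).
have fE : forall v : vert G, val (f v) = fr v by move=> v; rewrite val_insubd valid.
exists f; split.
- apply: bij_of.
  + move=> u v /(congr1 val); rewrite !fE /fr.
    case: (tauV hok u) => [tu|[tu|tu]]; case: (tauV hok v) => [tv|[tv|tv]];
      rewrite tu tv //= => h.
    * by case: h => /eqP; rewrite toT1_eq // => /eqP.
    * case: h => /eqP h1 /eqP h2; move: h1 h2; rewrite !toT1_eq ?tgt1 ?s1 // => /eqP h1 /eqP h2.
      exact: Inj.
    * case: h => /eqP h1 /eqP h2; move: h1 h2.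
      rewrite !toT1_eq ?tgt1 ?s1 ?t2_2 // => /eqP h1 /eqP h2.
      by rewrite -(t32 hsym hok tu) -(t32 hsym hok tv) (Inj (t2_2 _ tu) (t2_2 _ tv) h1 h2).
  + case=> r hr; case: r hr => [u'|[[p q]|[p q]]] hr.
    * exists (val u'); apply: val_inj; rewrite fE /fr (eqP (svalP u')) /=.
      by rewrite /toT1 valKd.
    * have tp : tau (val p) = 1 by apply/eqP; exact: (svalP p).
      have tq : tau (val q) = 1 by apply/eqP; exact: (svalP q).
      case: (Sur tp tq hr) => a [ta sa ga].
      exists a; apply: val_inj; rewrite fE /fr ta /= sa ga.
      by rewrite /toT1 !valKd.
    * have tp : tau (val p) = 1 by apply/eqP; exact: (svalP p).
      have tq : tau (val q) = 1 by apply/eqP; exact: (svalP q).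
      case: (Sur tp tq hr) => a [ta sa ga].
      exists (t3n a); apply: val_inj; rewrite fE /fr t3_3 //= t23 // sa ga.
      by rewrite /toT1 !valKd.
- move=> u v /=; rewrite !fE.
  wlog le : u v / tau u <= tau v.
    move=> H; case: (leqP (tau u) (tau v)) => h; first exact: H.
    by rewrite gad_adj_sym hsym; apply: H; apply: ltnW.
  rewrite /fr; case: (tauV hok u) => [tu|[tu|tu]]; case: (tauV hok v) => [tv|[tv|tv]];
    rewrite tu tv in le * => //=.
  + by rewrite (nos 1).
  + by rewrite toT1_eq ?s1 // hsym edge_src ?tv // eq_sym.
  + by rewrite toT1_eq ?tgt1 ?t2_2 // tgt_t2 // hsym edge_src ?tv // eq_sym.
  + by rewrite (nos 2).
  + rewrite xpair_eqE !toT1_eq ?tgt1 ?s1 ?t2_2 // edge_t3 //.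
    apply/andP/eqP => [[/eqP h1 /eqP h2]|->].
      by rewrite (Inj tu (t2_2 _ tv) h1 h2) t32.
    by rewrite t23 ?eqxx.
  + by rewrite (nos 3).
- move=> u /=; rewrite fE /fr.
  have labE : forall t, rowb (lab u) = rowb t -> lab u = t by move=> t; apply: rowb_inj.
  case: (tauV hok u) => [tu|[tu|tu]]; rewrite tu /=; symmetry; apply: labE; apply/eqP.
  + by rewrite -tau0_1; apply/eqP.
  + by rewrite -tau0_2; apply/eqP.
  + by rewrite -tau0_3; apply/eqP.
Qed.
End Back.
Definition traw (T : finType) (r : gad_raw T) : nat :=
  match r with inl _ => 1 | inr (inl _) => 2 | inr (inr _) => 3 end.

Lemma n12 : (1 == 2) = false. Proof. by []. Qed.
Lemma n13 : (1 == 3) = false. Proof. by []. Qed.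
Lemma n21 : (2 == 1) = false. Proof. by []. Qed.
Lemma n23 : (2 == 3) = false. Proof. by []. Qed.
Lemma n31 : (3 == 1) = false. Proof. by []. Qed.
Lemma n32 : (3 == 2) = false. Proof. by []. Qed.

Section Fwd.
Variable d' : nat.
Variable G' : graph d'.
Hypothesis hslo : strict_linear_order G'.
Local Notation H := (gad G').
Local Notation E := (@edge d' G').
Local Notation V := (vert G').

Lemma H_und : undirected H.
Proof.
split; first by case=> [[u|[e|e]] h].
by move=> y z /=; exact: gad_adj_sym.
Qed.

Lemma tauH (y : vert H) : tau y = traw (val y).
Proof.
case: y => [[u|[e|e]] h]; rewrite /tau /=.
- by change (tau0 (rowb t1) = 1); rewrite /tau0 eqxx.
- by change (tau0 (rowb t2) = 2); rewrite /tau0 eq_sym (negbTE r12) eqxx.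
- change (tau0 (rowb t3) = 3).
  by rewrite /tau0 eq_sym (negbTE r13) eq_sym (negbTE r23) eqxx.
Qed.

Lemma cardH_sub (P : pred (gad_raw V)) :
  #|[pred y : vert H | P (val y)]| = #|[pred r | gad_valid E r && P r]|.
Proof.
rewrite -(card_image val_inj); apply: eq_card => r; rewrite inE.
apply/imageP/andP => [[y hy ->]|[hv hp]].
  by split; [exact: (svalP y) | exact: hy].
by exists (exist _ r hv).
Qed.

Lemma nbkH k (y : vert H) :
  #|nbk k y| = #|[pred r | gad_valid E r && (gad_adj_raw (val y) r && (traw r == k))]|.
Proof. by rewrite -cardH_sub; apply: eq_card => z; rewrite !inE /=; rewrite ?n12 ?n13 ?n21 ?n23 ?n31 ?n32 ?andbF tauH. Qed.

Definition outd (u : V) := #|[pred w | E u w]|.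

Lemma s_inl (y : vert H) u : val y = inl u -> cnt t2 y = outd u.
Proof.
move=> hy; rewrite cnt2E nbkH hy /outd.
have inj : injective (fun w : V => (inr (inl (u, w)) : gad_raw V)) by move=> w w' [].
rewrite -(card_image inj); apply: eq_card => r; rewrite inE.
apply/andP/imageP => [[hv /andP [ha ht]]|[w hw ->]].
  case: r hv ha ht => [a|[[a b]|[a b]]] //= hv /eqP ha _.
  by exists b; [rewrite inE -ha | rewrite ha].
by rewrite /= eqxx; split.
Qed.

Lemma outd_lt (u w : V) : E u w -> outd w < outd u.
Proof.
move=> huw; apply: proper_card; apply/properP; split.
  apply/subsetP => z; rewrite !inE => h.
  by case: hslo => _ htr _; exact: (htr w u z huw h).
exists w; rewrite !inE // ; case: hslo => hirr _ _; by rewrite hirr.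
Qed.

Lemma outd_inj (u w : V) : outd u = outd w -> u = w.
Proof.
move=> e; apply/eqP/negPn/negP => hne; case: hslo => _ _ htot.
case/orP: (htot u w hne) => /outd_lt; by rewrite e ltnn.
Qed.

Lemma okH (y : vert H) : okb (F1 y).
Proof.
rewrite /okb F1E cnt1E cnt2E cnt3E tauH !nbkH.
case: y => r hv /=; case: r hv => [u|[e|e]] hv /=.
- have -> : #|[pred r | gad_valid E r && (gad_adj_raw (inl u) r && (traw r == 1))]| = 0.
    by apply: eq_card0 => -[a|[a|a]]; rewrite inE /= ?andbF.
  rewrite eqxx /= orbF; move/existsP: hv => [w /orP [h|h]].
  + rewrite addn_gt0; apply/orP; left; apply/card_gt0P; exists (inr (inl (u, w))).
    by rewrite inE /= h eqxx.
  + rewrite addn_gt0; apply/orP; right; apply/card_gt0P; exists (inr (inr (w, u))).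
    by rewrite inE /= h eqxx.
- have -> : #|[pred r | gad_valid E r && (gad_adj_raw (inr (inl e)) r && (traw r == 1))]| = 1.
    apply: (@eq_card1 _ (inl e.1)) => -[a|[a|a]]; rewrite !inE /= ?n12 ?n13 ?n21 ?n23 ?n31 ?n32 ?andbF //.
    rewrite andbT; apply/andP/eqP => [[_ /eqP ->] //|[->]].
    by split=> //; apply/existsP; exists e.2; rewrite (hv : E e.1 e.2).
  have -> : #|[pred r | gad_valid E r && (gad_adj_raw (inr (inl e)) r && (traw r == 3))]| = 1.
    apply: (@eq_card1 _ (inr (inr e))) => -[a|[a|a]]; rewrite !inE /= ?n12 ?n13 ?n21 ?n23 ?n31 ?n32 ?andbF //.
    by rewrite andbT; apply/andP/eqP => [[_ /eqP ->] //|[->]]; split.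
  have -> : #|[pred r | gad_valid E r && (gad_adj_raw (inr (inl e)) r && (traw r == 2))]| = 0.
    by apply: eq_card0 => -[a|[a|a]]; rewrite inE /= ?n12 ?n13 ?n21 ?n23 ?n31 ?n32 ?andbF.
  by [].
- have -> : #|[pred r | gad_valid E r && (gad_adj_raw (inr (inr e)) r && (traw r == 1))]| = 1.
    apply: (@eq_card1 _ (inl e.2)) => -[a|[a|a]]; rewrite !inE /= ?n12 ?n13 ?n21 ?n23 ?n31 ?n32 ?andbF //.
    rewrite andbT; apply/andP/eqP => [[_ /eqP ->] //|[->]].
    by split=> //; apply/existsP; exists e.1; rewrite (hv : E e.1 e.2) orbT.
  have -> : #|[pred r | gad_valid E r && (gad_adj_raw (inr (inr e)) r && (traw r == 2))]| = 1.
    apply: (@eq_card1 _ (inr (inl e))) => -[a|[a|a]]; rewrite !inE /= ?n12 ?n13 ?n21 ?n23 ?n31 ?n32 ?andbF //.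
    by rewrite andbT; apply/andP/eqP => [[_ /eqP ->] //|[->]]; split.
  have -> : #|[pred r | gad_valid E r && (gad_adj_raw (inr (inr e)) r && (traw r == 3))]| = 0.
    by apply: eq_card0 => -[a|[a|a]]; rewrite inE /= ?n12 ?n13 ?n21 ?n23 ?n31 ?n32 ?andbF.
  by [].
Qed.

Definition F3raw (r : gad_raw V) : q4 :=
  match r with inl u => (1, outd u, 0, 0) | inr (inl e) => (2, outd e.1, outd e.2, 0)
  | inr (inr _) => (3, 0, 0, 0) end.

Lemma F3H_E (y : vert H) : F3 y = F3raw (val y).
Proof.
have hok := okH.
case: y => r hr; case: r hr => [u|[e|e]] hr; rewrite (F3E hok) tauH /=.
- by rewrite (@s_inl (exist _ (inl u) hr) u).
- have he : E e.1 e.2 := hr.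
  have v1 : gad_valid E (inl e.1) by apply/existsP; exists e.2; rewrite he.
  have v2 : gad_valid E (inl e.2) by apply/existsP; exists e.1; rewrite he orbT.
  set y : vert H := exist _ (inr (inl e)) hr.
  have ty : tau y != 1 by rewrite tauH.
  have -> : src y = exist _ (inl e.1) v1.
    case: (src_spec hok ty) => _ [_ u]; symmetry; apply: u; last by rewrite tauH.
    by rewrite /= eqxx.
  have -> : t3n y = exist _ (inr (inr e)) (hr : gad_valid E (inr (inr e))).
    case: (t3_spec hok (_ : tau y = 2)) => [|_ [_ u]]; first by rewrite tauH.
    symmetry; apply: u; last by rewrite tauH.
    by rewrite /= eqxx.
  set z : vert H := exist _ (inr (inr e)) _.
  have tz : tau z != 1 by rewrite tauH.
  have -> : src z = exist _ (inl e.2) v2.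
    case: (src_spec hok tz) => _ [_ u]; symmetry; apply: u; last by rewrite tauH.
    by rewrite /= eqxx.
  by rewrite (@s_inl (exist _ (inl e.1) v1) e.1) // (@s_inl (exist _ (inl e.2) v2) e.2).
- by [].
Qed.

Lemma cFH q : cF H q = #|[pred r | gad_valid E r && (F3raw r == q)]|.
Proof. by rewrite /cF -cardH_sub; apply: eq_card => y; rewrite !inE F3H_E. Qed.

Lemma valid_l (u w : V) : E u w -> gad_valid E (inl u).
Proof. by move=> h; apply/existsP; exists w; rewrite h. Qed.
Lemma valid_r (u w : V) : E u w -> gad_valid E (inl w).
Proof. by move=> h; apply/existsP; exists u; rewrite h orbT. Qed.

Lemma GoodH : Good H.
Proof.
split; [|split].
- rewrite cFH; apply: eq_card0 => -[u|[e|e]]; by rewrite inE /= !xpair_eqE andbF.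
- move=> i; rewrite cFH; apply/card_le1_eqP => r r'.
  case: r => [u|[e|e]]; rewrite inE /= !xpair_eqE ?n21 ?n31 ?andbF //.
  case: r' => [u'|[e'|e']]; rewrite inE /= !xpair_eqE ?n21 ?n31 ?andbF //.
  move=> /and3P [_ h1 _] /and3P [_ h2 _]; move: h1 h2; rewrite !eqxx ?andbT /= => /eqP h1 /eqP h2.
  by rewrite (@outd_inj u' u) // h1 h2.
- move=> i j; rewrite !cFH; case: ifP => hc.
  + case/and3P: hc => ji /card_gt0P [r1] hr1 /card_gt0P [r2] hr2.
    case: r1 hr1 => [u|[e|e]]; rewrite inE /= !xpair_eqE ?n21 ?n31 ?andbF // => hu.
    move: hu; rewrite !eqxx ?andbT /= => /andP [vu /eqP ou].
    case: r2 hr2 => [w|[e|e]]; rewrite inE /= !xpair_eqE ?n21 ?n31 ?andbF // => hw.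
    move: hw; rewrite !eqxx ?andbT /= => /andP [vw /eqP ow].
    have huw : E u w.
      have hne : u != w by apply/eqP => ew; move: ji; rewrite -ou -ow ew ltnn.
      case: hslo => _ _ htot; case/orP: (htot u w hne) => // /outd_lt.
      by rewrite ou ow ltnNge (ltnW ji).
    apply: (@eq_card1 _ (inr (inl (u, w)))) => -[a|[[a b]|[a b]]];
      rewrite inE /= !xpair_eqE ?n12 ?n32 ?andbF //=.
    rewrite inE eqxx andbT.
    apply/idP/idP => [/and3P [hab /eqP oa /eqP ob]|/eqP [-> ->]].
      have -> : a = u by apply: outd_inj; rewrite oa ou.
      have -> : b = w by apply: outd_inj; rewrite ob ow.
      exact: eqxx.
    by rewrite huw ou ow !eqxx.
  + apply: eq_card0 => -[a|[[a b]|[a b]]]; rewrite inE /= !xpair_eqE ?n12 ?n32 ?andbF //=.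
    apply/negP => /andP [hab h]; move: h; rewrite !eqxx ?andbT /= => /andP [/eqP oa /eqP ob].
    move: hc; rewrite -oa -ob outd_lt //=.
    have -> : 0 < #|[pred r | gad_valid E r && (F3raw r == (1, outd a, 0, 0))]|.
      by apply/card_gt0P; exists (inl a); rewrite inE (valid_l hab) /= !eqxx.
    have -> // : 0 < #|[pred r | gad_valid E r && (F3raw r == (1, outd b, 0, 0))]|.
      by apply/card_gt0P; exists (inl b); rewrite inE (valid_r hab) /= !eqxx.
Qed.
End Fwd.

Theorem theorem5 :
  exists C : acr_classifier 3,
    forall (G : graph 3), undirected G ->
      forall x : vert G, accepts C x <-> phi_GadLin x.
Proof.
exists theC => G [hirr hsym] x; rewrite accepts_Good; split.
  by move/bPE => hG; exact: (back hsym hG x).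
case=> d' [G' [hslo [f [bf he hl]]]].
have := accepts_iso theC bf he hl x; rewrite !accepts_Good => e.
have h := GoodH hslo; have := proj2 (bPE _) h; rewrite -e.
by [].
Qed.
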